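(* Let $A\in\mathbb{R}^{m\times n}$, $b\in\mathbb{R}^m$, and let $g:\mathbb{R}^m\to\mathbb{R}$ be $\mu_g$-strongly convex. Let $h(z):=g(z)-b^\top z$ and let $\hat z$ be the unique solution of $\min_{z}h(z)$ s.t. $A^\top z=0$. Let $\tilde z^*_k\in\mathbb{R}^m$, $z_k:=\nabla h^*(\tilde z^*_k)$, let $\mathcal{J}\subseteq[n]$ with $A_{:,\mathcal{J}}\ne 0$, $r:=(A_{:,\mathcal{J}})^\top z_k$, and for $\delta_z>0$ set $$\tilde z^*_{k+1}:=\tilde z^*_k-\delta_z\frac{\|r\|_2^2}{\|A_{:,\mathcal{J}}r\|_2^2}A_{:,\mathcal{J}}r,\qquad z_{k+1}:=\nabla h^*(\tilde z^*_{k+1})$$ (with $\tilde z^*_{k+1}:=\tilde z^*_k$ if $r=0$). Then $$D_h^{\tilde z^*_{k+1}}(z_{k+1},\hat z)\le D_h^{\tilde z^*_k}(z_k,\hat z)-\frac{\delta_z(2\mu_g-\delta_z)}{2\mu_g}\frac{\|r\|_2^4}{\|A_{:,\mathcal{J}}r\|_2^2}\le D_h^{\tilde z^*_k}(z_k,\hat z)-\frac{\delta_z(2\mu_g-\delta_z)}{2\mu_g}\frac{\|r\|_2^2}{\sigma_{\max}^2(A_{:,\mathcal{J}})},$$ where the middle term is interpreted as $0$ if $r=0$, and the second inequality is asserted for $0<\delta_z\le 2\mu_g$.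
   Context: $h^*$ denotes the Fenchel conjugate $h^*(u)=\sup_z\{\langle u,z\rangle-h(z)\}$, which is differentiable with $1/\mu_g$-Lipschitz gradient. The Bregman distance with respect to a convex function $h$ and $u\in\partial h(z)$ is $D_h^{u}(z,y):=h(y)-h(z)-\langle u,y-z\rangle=h^*(u)-\langle u,y\rangle+h(y)$ (note $\tilde z^*_k\in\partial h(z_k)$). $\sigma_{\max}(\cdot)$ is the largest singular value; $A_{:,\mathcal{J}}$ is the column submatrix indexed by $\mathcal{J}$. *)

(* Defs.v *)
From HB Require Import structures.
From mathcomp Require Import all_boot all_order all_algebra.
From mathcomp Require Import all_classical all_reals all_analysis.
Set Implicit Arguments. Unset Strict Implicit. Unset Printing Implicit Defensive.
Import Order.TTheory GRing.Theory Num.Theory.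
Import numFieldNormedType.Exports.
Local Open Scope ring_scope.
Local Open Scope classical_set_scope.

Section Defs.
Variable R : realType.

Definition dotv (m : nat) (u v : 'cV[R]_m) : R := \sum_i u i 0 * v i 0.
Definition norm2 (m : nat) (v : 'cV[R]_m) : R := dotv v v.

Definition strongly_convex (m : nat) (mu : R) (g : 'cV[R]_m -> R) : Prop :=
  0 < mu /\
  forall (x y : 'cV[R]_m) (t : R), 0 <= t -> t <= 1 ->
    g ((1 - t) *: x + t *: y) <=
      (1 - t) * g x + t * g y - mu / 2 * (t * (1 - t)) * norm2 (x - y).

Definition hfun (m : nat) (g : 'cV[R]_m -> R) (b : 'cV[R]_m) (z : 'cV[R]_m) : R :=
  g z - dotv b z.

Definition fconj (m : nat) (h : 'cV[R]_m -> R) (u : 'cV[R]_m) : R :=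
  sup [set dotv u z - h z | z in [set: 'cV[R]_m]].

Definition is_gradient (m : nat) (f : 'cV[R]_m -> R) (u z : 'cV[R]_m) : Prop :=
  differentiable f u /\ forall v : 'cV[R]_m, 'd f u v = dotv z v.

Definition bregman (m : nat) (h : 'cV[R]_m -> R) (u z y : 'cV[R]_m) : R :=
  h y - h z - dotv u (y - z).

(* column submatrix A_{:,J} (columns of J in increasing order) *)
Definition colJ (m n : nat) (A : 'M[R]_(m, n)) (J : {set 'I_n}) : 'M[R]_(m, #|J|) :=
  colsub (fun j : 'I_#|J| => enum_val j) A.

Definition sigma_max (m p : nat) (M : 'M[R]_(m, p)) : R :=
  sup [set Num.sqrt (norm2 (M *m v)) | v in [set v : 'cV[R]_p | norm2 v = 1]].

Definition resid (m n : nat) (A : 'M[R]_(m, n)) (J : {set 'I_n}) (z : 'cV[R]_m)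
  : 'cV[R]_#|J| := (colJ A J)^T *m z.

Definition kstep (m n : nat) (A : 'M[R]_(m, n)) (J : {set 'I_n}) (z : 'cV[R]_m)
  (delta : R) (u : 'cV[R]_m) : 'cV[R]_m :=
  let r := resid A J z in
  if r == 0 then u
  else u - (delta * (norm2 r / norm2 (colJ A J *m r))) *: (colJ A J *m r).

Definition midterm (m n : nat) (A : 'M[R]_(m, n)) (J : {set 'I_n}) (z : 'cV[R]_m) : R :=
  let r := resid A J z in
  if r == 0 then 0 else norm2 r ^+ 2 / norm2 (colJ A J *m r).

End Defs.

(* Main.v *)
Require Import Defs.
From HB Require Import structures.
From mathcomp Require Import all_boot all_order all_algebra.
From mathcomp Require Import all_classical all_reals all_analysis.
From mathcomp Require Import ring lra.
Import Order.TTheory GRing.Theory Num.Theory.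
Import numFieldNormedType.Exports.
Local Open Scope ring_scope.
Set Implicit Arguments. Unset Strict Implicit.

Lemma dotvC (R : realType) m (u v : 'cV[R]_m) : dotv u v = dotv v u.
Proof. by apply: eq_bigr => i _; rewrite mulrC. Qed.

Lemma dotvDl (R : realType) m (u v w : 'cV[R]_m) : dotv (u + v) w = dotv u w + dotv v w.
Proof. rewrite /dotv -big_split /=; apply: eq_bigr => i _; rewrite !mxE; ring. Qed.

Lemma dotvZl (R : realType) m a (u w : 'cV[R]_m) : dotv (a *: u) w = a * dotv u w.
Proof. rewrite /dotv mulr_sumr; apply: eq_bigr => i _; rewrite !mxE; ring. Qed.

Lemma dotvNl (R : realType) m (u w : 'cV[R]_m) : dotv (- u) w = - dotv u w.
Proof. by rewrite -scaleN1r dotvZl mulN1r. Qed.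

Lemma dotvBl (R : realType) m (u v w : 'cV[R]_m) : dotv (u - v) w = dotv u w - dotv v w.
Proof. by rewrite dotvDl dotvNl. Qed.

Lemma dotvDr (R : realType) m (u v w : 'cV[R]_m) : dotv w (u + v) = dotv w u + dotv w v.
Proof. by rewrite dotvC dotvDl !(dotvC w). Qed.

Lemma dotvZr (R : realType) m a (u w : 'cV[R]_m) : dotv w (a *: u) = a * dotv w u.
Proof. by rewrite dotvC dotvZl dotvC. Qed.

Lemma dotvNr (R : realType) m (u w : 'cV[R]_m) : dotv w (- u) = - dotv w u.
Proof. by rewrite dotvC dotvNl dotvC. Qed.

Lemma dotvBr (R : realType) m (u v w : 'cV[R]_m) : dotv w (u - v) = dotv w u - dotv w v.
Proof. by rewrite dotvDr dotvNr. Qed.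

Lemma dotv0l (R : realType) m (w : 'cV[R]_m) : dotv 0 w = 0.
Proof. by rewrite /dotv big1 // => i _; rewrite mxE mul0r. Qed.

Lemma norm2_ge0 (R : realType) m (v : 'cV[R]_m) : 0 <= norm2 v.
Proof. by apply: sumr_ge0 => i _; rewrite -expr2 sqr_ge0. Qed.

Lemma coord_le (R : realType) m (v : 'cV[R]_m) i : v i 0 ^+ 2 <= norm2 v.
Proof.
rewrite /norm2 /dotv (bigD1 i) //= -expr2 lerDl.
by apply: sumr_ge0 => j _; rewrite -expr2 sqr_ge0.
Qed.

Lemma norm2_eq0 (R : realType) m (v : 'cV[R]_m) : norm2 v = 0 -> v = 0.
Proof.
move=> /eqP; rewrite /norm2 /dotv psumr_eq0; last by move=> i _; rewrite -expr2 sqr_ge0.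
move=> /allP H; apply/matrixP => i j; rewrite ord1 mxE.
have := H i (mem_index_enum _); rewrite -expr2 sqrf_eq0 => /eqP //.
Qed.

Lemma dotv_mul (R : realType) m p (M : 'M[R]_(m, p)) (u : 'cV[R]_m) (v : 'cV[R]_p) :
  dotv u (M *m v) = dotv (M^T *m u) v.
Proof.
rewrite /dotv.
under eq_bigr do rewrite mxE big_distrr.
under [RHS]eq_bigr do rewrite mxE big_distrl.
rewrite exchange_big /=; apply: eq_bigr => j _; apply: eq_bigr => i _.
rewrite !mxE; ring.
Qed.

Lemma norm2Z (R : realType) m a (v : 'cV[R]_m) : norm2 (a *: v) = a ^+ 2 * norm2 v.
Proof. by rewrite /norm2 dotvZl dotvZr; ring. Qed.

Lemma norm2B (R : realType) m (u v : 'cV[R]_m) :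
  norm2 (u - v) = norm2 u - 2 * dotv u v + norm2 v.
Proof. rewrite /norm2 dotvBl !dotvBr (dotvC v u); ring. Qed.

Lemma young (R : realType) m (mu : R) (d e : 'cV[R]_m) : 0 < mu ->
  dotv d e - mu / 2 * norm2 e <= norm2 d / (2 * mu).
Proof.
move=> mu0; have := norm2_ge0 (d - mu *: e).
rewrite norm2B norm2Z dotvZr => H.
rewrite ler_pdivlMr; last by lra.
nra.
Qed.

Definition SC (R : realType) m (mu : R) (f : 'cV[R]_m -> R) :=
  forall (x y : 'cV[R]_m) (t : R), 0 <= t -> t <= 1 ->
    f ((1 - t) *: x + t *: y) <=
      (1 - t) * f x + t * f y - mu / 2 * (t * (1 - t)) * norm2 (x - y).

Definition Cvx (R : realType) m (f : 'cV[R]_m -> R) :=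
  forall (x y : 'cV[R]_m) (t : R), 0 <= t -> t <= 1 ->
    f ((1 - t) *: x + t *: y) <= (1 - t) * f x + t * f y.

Lemma SC_lin (R : realType) m mu (f : 'cV[R]_m -> R) c :
  SC mu f -> SC mu (fun w => f w - dotv c w).
Proof.
move=> H x y t t0 t1 /=; rewrite dotvDr !dotvZr.
have := H x y t t0 t1; lra.
Qed.

Lemma SC_cvx (R : realType) m mu (f : 'cV[R]_m -> R) : 0 <= mu -> SC mu f -> Cvx f.
Proof.
move=> mu0 H x y t t0 t1; have := H x y t t0 t1.
have : 0 <= mu / 2 * (t * (1 - t)) * norm2 (x - y).
  by rewrite !mulr_ge0 ?norm2_ge0 // ?subr_ge0 // divr_ge0.
lra.
Qed.

Lemma Cvx_shift (R : realType) m (f : 'cV[R]_m -> R) z :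
  Cvx f -> Cvx (fun x => f (z + x)).
Proof.
move=> H x y t t0 t1 /=.
have -> : z + ((1 - t) *: x + t *: y) = (1 - t) *: (z + x) + t *: (z + y).
  by apply/matrixP => i j; rewrite !mxE; ring.
exact: H.
Qed.

Lemma box_ub (R : realType) m (f : 'cV[R]_m -> R) : Cvx f ->
  forall rho, 0 < rho -> exists M, forall x : 'cV[R]_m, (forall i, `|x i 0| <= rho) -> f x <= M.
Proof.
move=> Hf.
have P : forall k rho, 0 < rho -> exists M, forall x : 'cV[R]_m,
    (forall i, `|x i 0| <= rho) -> (forall i : 'I_m, (k <= i)%N -> x i 0 = 0) -> f x <= M.
  elim=> [|k IH] rho rho0.
    exists (f 0) => x _ hx; have -> // : x = 0.
    by apply/matrixP => i j; rewrite ord1 mxE; exact: hx.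
  case: (ltnP k m) => km; last first.
    have [M HM] := IH rho rho0; exists M => x hb hs; apply: HM => // i ki.
    by move: (ltn_ord i); rewrite ltnNge (leq_trans km ki).
  pose ik := Ordinal km.
  pose e : 'cV[R]_m := \col_i (i == ik)%:R.
  have rho20 : 0 < 2 * rho by lra.
  have [M1 HM1] := IH (2 * rho) rho20.
  set a := f ((- (2 * rho)) *: e); set b := f ((2 * rho) *: e).
  exists (M1 / 2 + (`|a| + `|b|) / 2) => x hb hs.
  pose x' : 'cV[R]_m := \col_i (if i == ik then 0 else x i 0).
  have Ex : x = (1 - 2^-1) *: (2 *: x') + 2^-1 *: ((2 * x ik 0) *: e).
    apply/matrixP => i j; rewrite ord1 !mxE.
    by case: eqP => [->|_] /=; field.
  have H1 : f (2 *: x') <= M1.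
    apply: HM1 => [i|i ki]; rewrite !mxE.
      case: eqP => _; first by rewrite mulr0 normr0; lra.
      by rewrite normrM ger0_norm //; have := hb i; lra.
    case: eqP => [//|/eqP ne]; first by rewrite mulr0.
    rewrite hs ?mulr0 //.
    rewrite ltn_neqAle ki andbT; apply/eqP => E; move: ne; apply/negP; rewrite negbK.
    by apply/eqP/val_inj; rewrite /= E.
  have H2 : f ((2 * x ik 0) *: e) <= `|a| + `|b|.
    set s := 2 * x ik 0.
    have hs' : `|s| <= 2 * rho by rewrite normrM ger0_norm //; have := hb ik; lra.
    set t := (s + 2 * rho) / (4 * rho).
    have t0 : 0 <= t.
      rewrite /t divr_ge0 //; last by lra.
      by move: hs'; rewrite ler_norml; lra.
    have t1 : t <= 1.
      rewrite /t ler_pdivrMr; last by lra.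
      by move: hs'; rewrite ler_norml; lra.
    have -> : s *: e = (1 - t) *: ((- (2 * rho)) *: e) + t *: ((2 * rho) *: e).
      by apply/matrixP => i j; rewrite !mxE /t; field; lra.
    apply: le_trans (Hf _ _ _ t0 t1) _.
    rewrite -/a -/b.
    have := ler_norm a; have := ler_norm b; have := normr_ge0 a; have := normr_ge0 b.
    nra.
  rewrite {1}Ex; apply: le_trans (Hf _ _ _ _ _) _; try lra.
move=> rho rho0; have [M HM] := P m rho rho0; exists M => x hb.
apply: HM => // i mi; have := ltn_ord i; by rewrite ltnNge mi.
Qed.

Lemma norm2N (R : realType) m (v : 'cV[R]_m) : norm2 (- v) = norm2 v.
Proof. by rewrite /norm2 dotvNl dotvNr opprK. Qed.

Lemma coord_le_sqrt (R : realType) m (v : 'cV[R]_m) i : `|v i 0| <= Num.sqrt (norm2 v).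
Proof.
by rewrite -sqrtr_sqr; apply: ler_wsqrtr; exact: coord_le.
Qed.

Lemma SC_lb (R : realType) m mu (G : 'cV[R]_m -> R) : 0 < mu -> SC mu G ->
  exists L, forall w, L <= G w.
Proof.
move=> mu0 H.
have Hc := SC_cvx (ltW mu0) H.
have [M HM] := box_ub Hc ltr01.
have Hbox : forall v : 'cV[R]_m, (forall i, `|v i 0| <= 1) -> 2 * G 0 - M <= G v.
  move=> v hv.
  have h12 : (0 : R) <= 2^-1 by lra.
  have h12' : (2^-1 : R) <= 1 by lra.
  have := H v (- v) _ h12 h12'.
  have -> : (1 - 2^-1) *: v + 2^-1 *: - v = 0.
    by apply/matrixP => i j; rewrite !mxE; field.
  have : G (- v) <= M by apply: HM => i; rewrite mxE normrN; exact: hv.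
  have : 0 <= mu / 2 * (2^-1 * (1 - 2^-1)) * norm2 (v - - v).
    by rewrite !mulr_ge0 ?norm2_ge0 //; lra.
  lra.
set L1 := 2 * G 0 - M; set c := mu / 2 + G 0 - L1.
exists (Num.min L1 (G 0 - c ^+ 2 / (2 * mu))) => w.
set s := Num.sqrt (norm2 w).
have s0 : 0 <= s by apply: sqrtr_ge0.
have ss : s ^+ 2 = norm2 w by apply: sqr_sqrtr; apply: norm2_ge0.
have hw : forall i, `|w i 0| <= s by move=> i; apply: coord_le_sqrt.
case: (lerP s 1) => hs1.
  rewrite ge_min; apply/orP; left; apply: Hbox => i; exact: le_trans (hw i) hs1.
rewrite ge_min; apply/orP; right.
have sp : 0 < s by lra.
set a := s^-1.
have a0 : 0 <= a by rewrite /a invr_ge0.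
have a1 : a <= 1 by rewrite /a invf_le1 //; lra.
have := H 0 w a a0 a1.
rewrite scaler0 add0r sub0r norm2N -ss => H1.
have Hv : L1 <= G (a *: w).
  apply: Hbox => i; rewrite mxE normrM ger0_norm //.
  rewrite /a -(mulVf (lt0r_neq0 sp)) ler_pM2l ?invr_gt0 //.
have E : s * ((1 - a) * G 0 + a * G w - mu / 2 * (a * (1 - a)) * s ^+ 2)
   = (s - 1) * G 0 + G w - mu / 2 * (s - 1) * s.
  by rewrite /a; field; apply: lt0r_neq0.
have H2 : s * G (a *: w) <= s * ((1 - a) * G 0 + a * G w - mu / 2 * (a * (1 - a)) * s ^+ 2).
  by rewrite ler_pM2l.
have H3 : s * L1 <= s * G (a *: w) by rewrite ler_pM2l.
have Q : 0 <= (mu * s - c) ^+ 2 / (2 * mu) by rewrite divr_ge0 ?sqr_ge0 //; lra.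
have E2 : G 0 - c ^+ 2 / (2 * mu) = s * L1 - (s - 1) * G 0 + mu / 2 * (s - 1) * s
   - (mu * s - c) ^+ 2 / (2 * mu).
  by rewrite /c; field; apply: lt0r_neq0.
rewrite E2; lra.
Qed.

Local Open Scope classical_set_scope.

Lemma fconj_ub (R : realType) m (h : 'cV[R]_m -> R) mu u : 0 < mu -> SC mu h ->
  has_ubound [set dotv u z - h z | z in [set: 'cV[R]_m]].
Proof.
move=> mu0 H; have [L HL] := SC_lb mu0 (SC_lin u H).
exists (- L) => y [z _ <-]; have := HL z; rewrite /=; lra.
Qed.

Lemma fconj_ge (R : realType) m (h : 'cV[R]_m -> R) mu u w : 0 < mu -> SC mu h ->
  dotv u w - h w <= fconj h u.
Proof.
move=> mu0 H; rewrite /fconj; apply: ub_le_sup; first exact: (fconj_ub u mu0 H).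
by exists w.
Qed.

Lemma fconj_adh (R : realType) m (h : 'cV[R]_m -> R) mu u e : 0 < mu -> SC mu h ->
  0 < e -> exists w, fconj h u - e < dotv u w - h w.
Proof.
move=> mu0 H e0.
have hs : has_sup [set dotv u z - h z | z in [set: 'cV[R]_m]].
  by split; [exists (dotv u 0 - h 0); exists 0 | exact: (fconj_ub u mu0 H)].
have [y [z _ <-] Hy] := sup_adherent e0 hs.
by exists z.
Qed.

Lemma fconj_le (R : realType) m (h : 'cV[R]_m -> R) u B :
  (forall w, dotv u w - h w <= B) -> fconj h u <= B.
Proof.
move=> HB; rewrite /fconj; apply: ge_sup.
  by exists (dotv u 0 - h 0); exists 0.
by move=> y [z _ <-]; exact: HB.
Qed.

Lemma maxz_quad (R : realType) m (h : 'cV[R]_m -> R) mu u z : 0 < mu -> SC mu h ->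
  dotv u z - h z = fconj h u ->
  forall w, dotv u w - h w <= fconj h u - mu / 2 * norm2 (w - z).
Proof.
move=> mu0 H Hz w.
set G := fun w => h w - dotv u w.
have HG : SC mu G := SC_lin u H.
have Gmin : forall y, G z <= G y.
  move=> y; have := fconj_ge u y mu0 H; rewrite /G; lra.
have -> : norm2 (w - z) = norm2 (z - w) by rewrite -norm2N opprB.
suff : G z + mu / 2 * norm2 (z - w) <= G w by rewrite /G; lra.
set N := norm2 (z - w).
have N0 : 0 <= N by apply: norm2_ge0.
apply/ler_addgt0Pr => e e0.
set C := mu / 2 * N.
have C0 : 0 <= C by rewrite /C mulr_ge0 //; lra.
set t := Num.min 1 (e / (C + 1)).
have t0 : 0 < t by rewrite /t lt_min ltr01 /= divr_gt0 //; lra.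
have t1 : t <= 1 by rewrite /t ge_min lexx.
have t2 : t <= e / (C + 1) by rewrite /t ge_min lexx orbT.
have := HG z w t (ltW t0) t1.
have := Gmin ((1 - t) *: z + t *: w) => A B.
have K : t * (G z + mu / 2 * (1 - t) * N) <= t * G w by rewrite /N; lra.
rewrite ler_pM2l // in K.
have K2 : t * C <= e.
  apply: le_trans (ler_wpM2r C0 t2) _.
  rewrite mulrAC ler_pdivrMr; last by lra.
  nra.
rewrite /C in K2 *; lra.
Qed.

Lemma smooth (R : realType) m (h : 'cV[R]_m -> R) mu u z d : 0 < mu -> SC mu h ->
  dotv u z - h z = fconj h u ->
  fconj h (u + d) <= fconj h u + dotv d z + norm2 d / (2 * mu).
Proof.
move=> mu0 H Hz; apply: fconj_le => w.
rewrite dotvDl.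
have := maxz_quad mu0 H Hz w.
have := young d (w - z) mu0.
rewrite dotvBr; lra.
Qed.

Lemma diff_bound (R : realType) (m:nat) (F : 'cV[R]_m -> R) u z : is_gradient F u z ->
  forall eta, 0 < eta -> exists2 del, 0 < del & forall d, `|d| < del ->
  `|F (u + d) - F u - dotv z d| <= eta * `|d|.
Proof.
move=> [df dz] eta heta.
have := diff_locally df.
move/eqaddoP => /(_ eta heta) /nbhs_norm0P [del hdel Hd].
exists del => // d hd.
have := Hd d hd => /=.
rewrite -dz.
suff -> : F (u + d) - F u - 'd F u d = (F \o shift u - (cst (F u) + 'd F u)) d by [].
change ((F \o shift u - (cst (F u) + 'd F u)) d) with (F (d + u) - (F u + 'd F u d)).
rewrite (addrC d u); ring.
Qed.

Lemma dotv_delta (R : realType) m (i : 'I_m) (w : 'cV[R]_m) :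
  dotv (delta_mx i 0) w = w i 0.
Proof.
rewrite /dotv (bigD1 i) //= big1 ?addr0; first by rewrite mxE !eqxx mul1r.
by move=> j /negbTE ji; rewrite mxE ji mul0r.
Qed.

Lemma delta_norm (R : realType) m (i : 'I_m) : `|(delta_mx i 0 : 'cV[R]_m)| <= 1.
Proof.
change (mx_norm (delta_mx i 0 : 'cV[R]_m) <= 1); rewrite mx_normrE; apply: bigmax_le => // [[j k]] _ /=.
by rewrite mxE; case: (_ && _); rewrite ?normr1 ?normr0.
Qed.

Lemma grad_max (R : realType) m (h : 'cV[R]_m -> R) mu u z : 0 < mu -> SC mu h ->
  is_gradient (fconj h) u z -> dotv u z - h z = fconj h u.
Proof.
move=> mu0 H Hg.
apply/eqP; rewrite eq_le (fconj_ge u z mu0 H) /=.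
apply/ler_addgt0Pr => e e0.
have Hc := SC_cvx (ltW mu0) H.
have [M HM] := box_ub (Cvx_shift z Hc) ltr01.
set C := M - h z.
have C0 : 0 <= C.
  have : h (z + 0) <= M by apply: HM => i; rewrite mxE normr0 ler01.
  by rewrite addr0 /C subr_ge0.
set U := \sum_i `|u i 0|.
have U0 : 0 <= U by apply: sumr_ge0 => i _.
have usc : forall tau (v : 'cV[R]_m), 0 < tau -> tau <= 1 -> (forall i, `|v i 0| <= tau) ->
    h (z + v) <= h z + tau * C.
  move=> tau v tau0 tau1 hv.
  have -> : z + v = (1 - tau) *: z + tau *: (z + tau^-1 *: v).
    by apply/matrixP => i j; rewrite !mxE; field; apply: lt0r_neq0.
  apply: le_trans (Hc _ _ _ (ltW tau0) tau1) _.
  have : h (z + tau^-1 *: v) <= M.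
    apply: HM => i; rewrite mxE normrM ger0_norm ?invr_ge0 ?(ltW tau0) //.
    by rewrite mulrC ler_pdivrMr // mul1r.
  rewrite /C; nra.
have lsc : forall tau (y : 'cV[R]_m), 0 < tau -> tau <= 1 ->
    (forall i, `|y i 0 - z i 0| <= tau) -> h z <= h y + tau * C.
  move=> tau y tau0 tau1 hy.
  have : h (z + (z - y)) <= h z + tau * C.
    by apply: usc => // i; rewrite !mxE distrC; exact: hy.
  have h12 : (0 : R) <= 2^-1 by lra.
  have h12' : (2^-1 : R) <= 1 by lra.
  have := Hc y (z + (z - y)) _ h12 h12'.
  have -> : (1 - 2^-1) *: y + 2^-1 *: (z + (z - y)) = z.
    by apply/matrixP => i j; rewrite !mxE; field.
  lra.
have dotb : forall tau (y : 'cV[R]_m), 0 <= tau ->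
    (forall i, `|y i 0 - z i 0| <= tau) -> dotv u y - tau * U <= dotv u z.
  move=> tau y tau0 hy.
  suff : dotv u (y - z) <= tau * U by rewrite dotvBr; lra.
  rewrite /dotv /U mulr_sumr; apply: ler_sum => i _.
  apply: le_trans (ler_norm _) _; rewrite normrM mulrC !mxE.
  by apply: ler_wpM2r => //; apply: hy.
set tau := Num.min 1 (e / (2 * (C + U + 1))).
have tau0 : 0 < tau by rewrite /tau lt_min ltr01 /= divr_gt0 //; lra.
have tau1 : tau <= 1 by rewrite /tau ge_min lexx.
have tau2 : tau * (C + U) <= e / 2.
  have t2 : tau <= e / (2 * (C + U + 1)) by rewrite /tau ge_min lexx orbT.
  have CU0 : 0 <= C + U by lra.
  apply: le_trans (ler_wpM2r CU0 t2) _.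
  rewrite mulrAC ler_pdivrMr; last by lra.
  rewrite mulrAC ler_pdivlMr; last by lra.
  nra.
have eta0 : 0 < tau / 2 by lra.
have [del del0 Hd] := diff_bound Hg eta0.
set eps := Num.min (e / 2) (tau * del / 4).
have eps0 : 0 < eps by rewrite /eps lt_min; apply/andP; split; rewrite ?divr_gt0 ?mulr_gt0 //; lra.
have eps1 : eps <= e / 2 by rewrite /eps ge_min lexx.
have eps2 : eps <= tau * del / 4 by rewrite /eps ge_min lexx orbT.
have [w Hw] := fconj_adh u mu0 H eps0.
have hclose : forall i, `|w i 0 - z i 0| <= tau.
  move=> i; set s := del / 2.
  have s0 : 0 < s by rewrite /s; lra.
  have key : forall sg, `|sg| <= s -> sg * (w i 0 - z i 0) <= eps + tau / 2 * s.
    move=> sg hsg; set d : 'cV[R]_m := sg *: delta_mx i 0.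
    have nd : `|d| <= s.
      rewrite /d normrZ; apply: le_trans hsg; rewrite -[leRHS]mulr1.
      by apply: ler_wpM2l => //; apply: delta_norm.
    have nd' : `|d| < del by rewrite /s in nd; lra.
    have := Hd d nd'.
    have := fconj_ge (u + d) w mu0 H.
    rewrite dotvDl /d dotvZl dotvZr dotv_delta (dotvC z) dotv_delta => A1 A2.
    have A3 := ler_norm (fconj h (u + sg *: delta_mx i 0) - fconj h u - sg * z i 0).
    have A4 : tau / 2 * `|d| <= tau / 2 * s by apply: ler_wpM2l => //; lra.
    rewrite /d in A4; lra.
  have k1 : s * (w i 0 - z i 0) <= eps + tau / 2 * s.
    by apply: key; rewrite ger0_norm // ltW.
  have k2 : - s * (w i 0 - z i 0) <= eps + tau / 2 * s.
    by apply: key; rewrite normrN ger0_norm // ltW.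
  have e3 : eps <= tau * s / 2 by rewrite /s; lra.
  rewrite ler_norml; apply/andP; split; nra.
have := lsc tau w tau0 tau1 hclose.
have := dotb tau w (ltW tau0) hclose.
lra.
Qed.

Lemma sigma_ub (R : realType) m p (M : 'M[R]_(m, p)) (v : 'cV[R]_p) :
  norm2 v = 1 -> Num.sqrt (norm2 (M *m v)) <= sigma_max M.
Proof.
move=> hv; rewrite /sigma_max; apply: ub_le_sup; last by exists v.
exists (1 + \sum_i (\sum_j `|M i j|) ^+ 2) => y [w /= hw <-].
have hwj : forall j, `|w j 0| <= 1.
  by move=> j; have := coord_le_sqrt w j; rewrite hw sqrtr1.
have HN : norm2 (M *m w) <= \sum_i (\sum_j `|M i j|) ^+ 2.
  rewrite /norm2 /dotv; apply: ler_sum => i _.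
  have Hi : `|(M *m w) i 0| <= \sum_j `|M i j|.
    rewrite mxE; apply: le_trans (ler_norm_sum _ _ _) _; apply: ler_sum => j _.
    rewrite normrM -[leRHS]mulr1; apply: ler_wpM2l => //.
  apply: le_trans (ler_norm _) _; rewrite normrM expr2.
  by apply: ler_pM.
have q0 := sqrtr_ge0 (norm2 (M *m w)).
have qq := sqr_sqrtr (norm2_ge0 (M *m w)).
nra.
Qed.

Local Close Scope classical_set_scope.
Unset Implicit Arguments.

Theorem mainTheorem3 (R : realType) (m n : nat) (A : 'M[R]_(m, n)) (b : 'cV[R]_m)
  (g : 'cV[R]_m -> R) (mu : R) (zhat uk zk uk1 zk1 : 'cV[R]_m)
  (J : {set 'I_n}) (delta : R) :
  strongly_convex mu g ->
  A^T *m zhat = 0 ->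
  (forall z : 'cV[R]_m, A^T *m z = 0 -> hfun g b zhat <= hfun g b z) ->
  is_gradient (fconj (hfun g b)) uk zk ->
  colJ A J != 0 ->
  0 < delta ->
  uk1 = kstep A J zk delta uk ->
  is_gradient (fconj (hfun g b)) uk1 zk1 ->
  bregman (hfun g b) uk1 zk1 zhat
    <= bregman (hfun g b) uk zk zhat
       - delta * (2 * mu - delta) / (2 * mu) * midterm A J zk
  /\ (delta <= 2 * mu ->
      bregman (hfun g b) uk zk zhat
       - delta * (2 * mu - delta) / (2 * mu) * midterm A J zk
      <= bregman (hfun g b) uk zk zhat
       - delta * (2 * mu - delta) / (2 * mu)
         * (norm2 (resid A J zk) / sigma_max (colJ A J) ^+ 2)).
Proof.
move=> [mu0 Hg] hAz _ Hk hJ d0 Huk1 Hk1.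
have H : SC mu (hfun g b) := SC_lin b Hg.
have E0 := grad_max mu0 H Hk.
have E1 := grad_max mu0 H Hk1.
have B : forall u z, dotv u z - hfun g b z = fconj (hfun g b) u ->
    bregman (hfun g b) u z zhat = hfun g b zhat - dotv u zhat + fconj (hfun g b) u.
  by move=> u z Ez; rewrite /bregman dotvBr; lra.
rewrite (B _ _ E0) (B _ _ E1).
have hAJz : (colJ A J)^T *m zhat = 0.
  apply/matrixP => i j; rewrite ord1.
  have E := congr1 (fun M : 'M[R]_(n, 1) => M (enum_val i) 0) hAz.
  move: E; rewrite /= [in RHS]mxE => E; rewrite [RHS]mxE -E !mxE.
  by apply: eq_bigr => k _; rewrite !mxE.
set F := fconj (hfun g b).
case: (eqVneq (resid A J zk) 0) => [r0|rn0].
  have -> : uk1 = uk by rewrite Huk1 /kstep /= r0 eqxx.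
  rewrite /midterm /= r0 eqxx /norm2 dotv0l mul0r mulr0 subr0.
  by split => // _; rewrite mulr0 subr0.
set r := resid A J zk.
set AJ := colJ A J.
set v := AJ *m r.
have Nr0 : 0 < norm2 r.
  rewrite lt_neqAle norm2_ge0 andbT; apply/eqP => E.
  by move: rn0; rewrite -/r (norm2_eq0 (esym E)) eqxx.
have Hvz : dotv zk v = norm2 r by rewrite /v dotv_mul.
have Nv0 : 0 < norm2 v.
  rewrite lt_neqAle norm2_ge0 andbT; apply/eqP => E.
  by move: Hvz; rewrite (norm2_eq0 (esym E)) dotvC dotv0l => E2; move: Nr0; rewrite -E2 ltxx.
have Hvzh : dotv v zhat = 0 by rewrite dotvC /v dotv_mul hAJz dotv0l.
set c := delta * (norm2 r / norm2 v).
have Huk1' : uk1 = uk + (- (c *: v)).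
  by rewrite Huk1 /kstep /= -/r (negbTE rn0).
have Hmid : midterm A J zk = norm2 r ^+ 2 / norm2 v.
  by rewrite /midterm /= -/r (negbTE rn0).
rewrite Hmid.
split.
  have Hs := smooth (- (c *: v)) mu0 H E0.
  rewrite -Huk1' -/F in Hs.
  rewrite dotvNl dotvZl (dotvC v) Hvz norm2N norm2Z in Hs.
  have Hd : dotv uk1 zhat = dotv uk zhat by rewrite Huk1' dotvDl dotvNl dotvZl Hvzh mulr0 subr0.
  rewrite Hd.
  have Id : - (c * norm2 r) + c ^+ 2 * norm2 v / (2 * mu)
      = - (delta * (2 * mu - delta) / (2 * mu) * (norm2 r ^+ 2 / norm2 v)).
    by rewrite /c; field; apply/andP; split; apply: lt0r_neq0.
  lra.
move=> hd2.
set s := sigma_max AJ.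
set v0 := (Num.sqrt (norm2 r))^-1 *: r.
have sr0 : 0 < Num.sqrt (norm2 r) by rewrite sqrtr_gt0.
have srr := sqr_sqrtr (ltW Nr0).
have Hv0 : norm2 v0 = 1.
  by rewrite /v0 norm2Z exprVn srr mulVf //; apply: lt0r_neq0.
have Hs := sigma_ub AJ Hv0.
rewrite -/s /v0 -scalemxAr norm2Z exprVn srr -/v in Hs.
set q := (norm2 r)^-1 * norm2 v in Hs.
have q0 : 0 < q by rewrite /q mulr_gt0 ?invr_gt0.
have sq0 := sqrtr_ge0 q.
have sqq := sqr_sqrtr (ltW q0).
have qs : q <= s ^+ 2 by nra.
have sqpos : 0 < Num.sqrt q by rewrite sqrtr_gt0.
have s2 : 0 < s ^+ 2 by nra.
have kk : 0 <= delta * (2 * mu - delta) / (2 * mu).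
  by rewrite divr_ge0 ?mulr_ge0 //; lra.
suff : norm2 r / s ^+ 2 <= norm2 r ^+ 2 / norm2 v.
  by move=> Hle; have := ler_wpM2l kk Hle; lra.
rewrite ler_pdivrMr //.
apply: le_trans (_ : norm2 r <= norm2 r ^+ 2 / norm2 v * q) _.
  rewrite /q le_eqVlt; apply/orP; left; apply/eqP.
  by field; apply/andP; split; apply: lt0r_neq0.
by apply: ler_wpM2l => //; rewrite divr_ge0 ?sqr_ge0 ?norm2_ge0.
Qed.
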